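(* For all natural numbers $n\geq 1$ and all $m\geq 2$, \[a_m(n)=a_{m-1}(2n,n).\]
   Context: For $m\geq 1$, $a_m(n)$ is the number of partitions of $n$ in which the smallest part occurs at least $m$ times, and $a_m(N,k)$ is the number of partitions of $N$ in which the smallest part occurs at least $m$ times and the largest part minus the smallest part equals $k$. *)

(* Defs.v *)
From mathcomp Require Import all_boot.
Set Implicit Arguments. Unset Strict Implicit. Unset Printing Implicit Defensive.

(* A partition of N is encoded by its multiplicity vector:
   [t : {ffun 'I_N -> 'I_N.+1}], where [t i] is the number of times the
   part [i.+1] occurs (parts range over 1..N, each multiplicity is <= N). *)
Definition mult_vec (N : nat) := {ffun 'I_N -> 'I_N.+1}.

Definition is_partition (N : nat) (t : mult_vec N) : bool :=
  \sum_(i < N) i.+1 * t i == N.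

Definition smallest_occurs_atleast (N m : nat) (t : mult_vec N) : bool :=
  [exists i : 'I_N, [&& 0 < t i, [forall j : 'I_N, (j < i) ==> (t j == 0 :> nat)]
                     & m <= t i]].

Definition largest_minus_smallest (N k : nat) (t : mult_vec N) : bool :=
  [exists i : 'I_N, exists j : 'I_N,
     [&& 0 < t i, 0 < t j,
         [forall l : 'I_N, (0 < t l) ==> (i <= l <= j)]
       & j.+1 - i.+1 == k]].

Definition a_m (m n : nat) : nat :=
  #|[set t : mult_vec n | is_partition t && smallest_occurs_atleast m t]|.

Definition a_mk (m N k : nat) : nat :=
  #|[set t : mult_vec N | [&& is_partition t, smallest_occurs_atleast m t
                            & largest_minus_smallest k t]]|.

(* Main.v *)
Require Import Defs.
From mathcomp Require Import all_boot.
From mathcomp Require Import zify.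
Set Implicit Arguments. Unset Strict Implicit. Unset Printing Implicit Defensive.

Definition tf N (t : mult_vec N) (k : nat) : nat :=
  match (insub k : option 'I_N) with Some i => nat_of_ord (t i) | None => 0 end.

Lemma tfE N (t : mult_vec N) (i : 'I_N) : tf t i = t i.
Proof. by rewrite /tf valK. Qed.

Lemma tf_out N (t : mult_vec N) k : N <= k -> tf t k = 0.
Proof. by move=> h; rewrite /tf insubN // -leqNgt. Qed.

Lemma tf_le N (t : mult_vec N) k : tf t k <= N.
Proof. rewrite /tf; case: insubP => [i _ _|_] //; by have := ltn_ord (t i). Qed.

Lemma tf_inj N (t1 t2 : mult_vec N) : (forall k, tf t1 k = tf t2 k) -> t1 = t2.
Proof. move=> h; apply/ffunP => i; apply: val_inj => /=; by rewrite -!tfE h. Qed.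

Definition mk N (h : nat -> nat) : mult_vec N := [ffun i : 'I_N => inord (h i)].

Lemma tf_mk N h k : (forall k, k < N -> h k <= N) ->
  tf (mk N h) k = if k < N then h k else 0.
Proof.
move=> hb; case: (ltnP k N) => hk; last by rewrite tf_out.
have -> : k = Ordinal hk by [].
by rewrite tfE ffunE inordK // ltnS hb.
Qed.

Lemma part_tfE N (t : mult_vec N) :
  is_partition t = (\sum_(0 <= k < N) k.+1 * tf t k == N).
Proof. by rewrite /is_partition big_mkord; congr (_ == _); apply: eq_bigr => i _; rewrite tfE. Qed.

Lemma small_tfE N m (t : mult_vec N) : smallest_occurs_atleast m t <->
  exists i, [/\ 0 < tf t i, (forall j, j < i -> tf t j = 0) & m <= tf t i].
Proof.
split.
  case/existsP => i /and3P [p /forallP al me]; exists i; split; rewrite ?tfE //.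
  move=> j ji; have jN : j < N := ltn_trans ji (ltn_ord i).
  have := al (Ordinal jN); rewrite ji /= => /eqP.
  by rewrite -(tfE t (Ordinal jN)).
case=> i [p al me].
have iN : i < N by rewrite ltnNge; apply/negP => /(tf_out t); move=> e; rewrite e in p.
apply/existsP; exists (Ordinal iN); rewrite -(tfE t (Ordinal iN)) /=.
apply/and3P; split => //; apply/forallP => j; apply/implyP => ji.
by rewrite -tfE al.
Qed.

Lemma lms_tfE N k (t : mult_vec N) : largest_minus_smallest k t <->
  exists i j, [/\ 0 < tf t i, 0 < tf t j, (forall l, 0 < tf t l -> i <= l <= j) & j - i = k].
Proof.
split.
  case/existsP => i /existsP [j /and4P [pi pj /forallP al e]].
  exists (nat_of_ord i), (nat_of_ord j); split; rewrite ?tfE //; last by move/eqP: e; rewrite subSS.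
  move=> l pl.
  have lN : l < N by rewrite ltnNge; apply/negP => /(tf_out t); move=> e'; rewrite e' in pl.
  by have := al (Ordinal lN); rewrite -(tfE t (Ordinal lN)) /= pl.
case=> i [j [pi pj al e]].
have iN : i < N by rewrite ltnNge; apply/negP => /(tf_out t); move=> e'; rewrite e' in pi.
have jN : j < N by rewrite ltnNge; apply/negP => /(tf_out t); move=> e'; rewrite e' in pj.
apply/existsP; exists (Ordinal iN); apply/existsP; exists (Ordinal jN).
rewrite -(tfE t (Ordinal iN)) -(tfE t (Ordinal jN)) /= pi pj subSS e eqxx andbT /=.
by apply/forallP => l; apply/implyP; rewrite -tfE; apply: al.
Qed.

Definition sidx N (t : mult_vec N) := find (fun k => 0 < tf t k) (iota 0 N).

Lemma sidx_spec N (t : mult_vec N) i : 0 < tf t i -> (forall j, j < i -> tf t j = 0) -> sidx t = i.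
Proof.
move=> p al.
have iN : i < N by rewrite ltnNge; apply/negP => /(tf_out t); move=> e'; rewrite e' in p.
have hs : has (fun k => 0 < tf t k) (iota 0 N).
  by apply/hasP; exists i => //; rewrite mem_iota.
have := hs; rewrite has_find size_iota => fN.
have := nth_find 0 hs; rewrite nth_iota // add0n -/(sidx t) => ps.
case: (ltngtP (sidx t) i) => // h.
  by rewrite al in ps.
by have := before_find 0 h; rewrite nth_iota // add0n p.
Qed.

Lemma sum_ind N (F : nat -> nat) c :
  \sum_(0 <= k < N) F k * (k == c) = if c < N then F c else 0.
Proof.
elim: N => [|N IH]; first by rewrite big_geq.
rewrite big_nat_recr //= IH ltnS.
by case: (ltngtP c N) => [h|h|->]; rewrite ?eqxx ?muln1 ?muln0 ?addn0.
Qed.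

Lemma sum_beyond N M (G : nat -> nat) : N <= M -> (forall k, N <= k -> G k = 0) ->
  \sum_(0 <= k < M) G k = \sum_(0 <= k < N) G k.
Proof.
move=> NM H; rewrite (big_cat_nat (leq0n N) NM) /=.
rewrite [X in _ + X]big1_seq ?addn0 // => k /andP[_]; rewrite mem_iota => /andP[h _]; exact: H.
Qed.

Lemma sum_ge2 N (F : nat -> nat) a b : a < N -> b < N -> a != b ->
  F a + F b <= \sum_(0 <= k < N) F k.
Proof.
move=> aN bN ab.
have : \sum_(0 <= k < N) F k * ((k == a) + (k == b)) <= \sum_(0 <= k < N) F k.
  apply: leq_sum => k _; rewrite -[X in _ <= X]muln1; apply: leq_mul => //.
  by case: (k =P a) => [->|_]; rewrite ?(negbTE ab) //; case: (k == b).
by rewrite (eq_bigr _ (fun k _ => mulnDr _ _ _)) big_split /= !sum_ind aN bN.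
Qed.

Lemma sum_ge3 N (F : nat -> nat) a b c : a < N -> b < N -> c < N -> a != b -> a != c -> b != c ->
  F a + F b + F c <= \sum_(0 <= k < N) F k.
Proof.
move=> aN bN cN ab ac bc.
have : \sum_(0 <= k < N) F k * ((k == a) + (k == b) + (k == c)) <= \sum_(0 <= k < N) F k.
  apply: leq_sum => k _; rewrite -[X in _ <= X]muln1; apply: leq_mul => //.
  case: (k =P a) => [->|_]; rewrite ?(negbTE ab) ?(negbTE ac) //.
  by case: (k =P b) => [->|_]; rewrite ?(negbTE bc) //; case: (k == c).
by rewrite (eq_bigr _ (fun k _ => mulnDr _ _ _)) big_split /=
  (eq_bigr _ (fun k _ => mulnDr _ _ _)) big_split /= !sum_ind aN bN cN.
Qed.

Lemma card_bij (T1 T2 : finType) (A : {set T1}) (B : {set T2}) (f : T1 -> T2) (g : T2 -> T1) :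
  {in A, forall x, f x \in B} -> {in B, forall y, g y \in A} ->
  {in A, cancel f g} -> {in B, cancel g f} -> #|A| = #|B|.
Proof.
move=> fB gA fK gK.
rewrite -(card_in_imset (f := f)); last first.
  by move=> x1 x2 h1 h2 e; rewrite -(fK x1 h1) e fK.
suff -> : f @: A = B by [].
apply/setP => y; apply/imsetP/idP => [[x xA ->]|yB]; first exact: fB.
by exists (g y); [exact: gA | rewrite gK].
Qed.

Lemma sum_ind1 N c :
  \sum_(0 <= k < N) k.+1 * (k == c) = if c < N then c.+1 else 0.
Proof. exact: (@sum_ind N (fun k => k.+1) c). Qed.

Definition fwd n (t : mult_vec n) : mult_vec n.*2 :=
  mk n.*2 (fun k => tf t k - (k == sidx t) + (k == sidx t + n)).
Definition bwd n (u : mult_vec n.*2) : mult_vec n :=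
  mk n (fun k => tf u k + (k == sidx u)).

Lemma A_spec n m (t : mult_vec n) : is_partition t -> smallest_occurs_atleast m t ->
  [/\ 0 < tf t (sidx t), (forall j, j < sidx t -> tf t j = 0), m <= tf t (sidx t),
      sidx t < n & \sum_(0 <= k < n) k.+1 * tf t k = n].
Proof.
rewrite part_tfE => /eqP hs /small_tfE [i [p al me]].
have -> := sidx_spec p al.
have iN : i < n by rewrite ltnNge; apply/negP => /(tf_out t); move=> e'; rewrite e' in p.
by split.
Qed.

Lemma tf_fwd n m (t : mult_vec n) k : 1 <= n -> is_partition t -> smallest_occurs_atleast m t ->
  tf (fwd t) k = tf t k - (k == sidx t) + (k == sidx t + n).
Proof.
move=> n1 hp hs; have [p al me sn sum] := A_spec hp hs.
rewrite /fwd tf_mk.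
  case: ifP => // /negbT; rewrite -leqNgt => hk.
  rewrite tf_out; last by lia.
  have -> : (k == sidx t + n) = false by apply/negbTE; lia.
  by case: (k == sidx t).
move=> k' hk'.
case: (k' =P sidx t + n) => [->|ne].
  rewrite tf_out; last by lia.
  by case: (_ == _); lia.
have := tf_le t k'; lia.
Qed.

Lemma B_spec n m (u : mult_vec n.*2) : 1 <= n -> 2 <= m ->
  is_partition u -> smallest_occurs_atleast m.-1 u -> largest_minus_smallest n u ->
  [/\ 0 < tf u (sidx u), (forall j, j < sidx u -> tf u j = 0), m.-1 <= tf u (sidx u),
      sidx u < n &
   [/\ tf u (sidx u + n) = 1, (forall k, n <= k -> k != sidx u + n -> tf u k = 0),
       (forall k, k < n -> tf u k + (k == sidx u) <= n) &
       \sum_(0 <= k < n) k.+1 * tf u k + (sidx u).+1 = n]].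
Proof.
move=> n1 m2; rewrite part_tfE => /eqP hsum /small_tfE [i [p al me]].
case/lms_tfE => i' [j [pi' pj alj e]].
have si := sidx_spec p al.
have ii' : i' = i.
  have [/andP [h1 _]] := (alj i p, alj j pj).
  case: (ltngtP i' i) => // h; first by have := al _ h; move=> e'; rewrite e' in pi'.
  have := alj _ p; lia.
subst i'.
have := alj _ pj => /andP [_ _].
have jN : j < n.*2 by rewrite ltnNge; apply/negP => /(tf_out u); move=> e'; rewrite e' in pj.
have ij : j = i + n by have := alj _ pj; lia.
subst j; rewrite si.
have iN : i < n by lia.
have two := @sum_ge2 n.*2 (fun k => k.+1 * tf u k) i (i + n) ltac:(lia) jN ltac:(lia).
rewrite hsum /= in two.
have c1 : tf u (i + n) = 1.
  have : (i + n).+1 * tf u (i + n) <= n.*2 by lia.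
  move: pj; case: (tf u (i + n)) => [|[|c]] //; nia.
have zero : forall k, n <= k -> k != i + n -> tf u k = 0.
  move=> k nk kn; case: (ltnP k n.*2) => kN; last by rewrite tf_out.
  have := @sum_ge3 n.*2 (fun k => k.+1 * tf u k) i (i + n) k ltac:(lia) jN kN
     ltac:(lia) ltac:(lia) ltac:(rewrite eq_sym; exact kn).
  rewrite hsum /= c1. case: (tf u k) => [|c] //. nia.
split => //; split => //.
- move=> k kn; case: (k =P i) => [->|ne].
    have : i.+1 * tf u i <= n - i.+1 by lia.
    nia.
  have := @sum_ge3 n.*2 (fun k => k.+1 * tf u k) i (i + n) k ltac:(lia) jN ltac:(lia)
     ltac:(lia) ltac:(apply/eqP; lia) ltac:(lia).
  rewrite hsum /= c1. nia.
- have e2 : \sum_(0 <= k < n.*2) k.+1 * tf u k =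
     \sum_(0 <= k < n.*2) (k.+1 * (tf u k * (k < n)) + k.+1 * (k == i + n)).
    apply: eq_bigr => k _; case: (ltnP k n) => kn.
      have -> : (k == i + n) = false by apply/negbTE; lia.
      by rewrite muln1 muln0 addn0.
    have tk : tf u k = (k == i + n).
      by case: (k =P i + n) => [->|ne]; [rewrite c1 | rewrite zero //; apply/eqP].
    by rewrite tk; case: (k == i + n); rewrite /= ?muln0 ?muln1 ?addn0.
  rewrite [X in _ = X]big_split sum_ind1 jN in e2.
  have e3 : \sum_(0 <= k < n.*2) k.+1 * (tf u k * (k < n)) = \sum_(0 <= k < n) k.+1 * tf u k.
    rewrite (@sum_beyond n); last 2 first.
    * lia.
    * by move=> k kn; rewrite (leq_gtF kn) /= !muln0.
    by apply: eq_big_nat => k /andP [_ ->]; rewrite muln1.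
  rewrite e3 in e2.
  have : n.*2 = \sum_(0 <= k < n) k.+1 * tf u k + (i + n).+1 
    by transitivity (\sum_(0 <= k < n.*2) k.+1 * tf u k); [rewrite hsum | exact: e2].
  lia.
Qed.

Lemma sidx_fwd n m (t : mult_vec n) : 1 <= n -> 2 <= m -> is_partition t ->
  smallest_occurs_atleast m t -> sidx (fwd t) = sidx t.
Proof.
move=> n1 m2 hp hs; have [p al me sn sum] := A_spec hp hs.
apply: sidx_spec.
  rewrite (tf_fwd _ n1 hp hs) eqxx.
  have -> : (sidx t == sidx t + n) = false by apply/negbTE; lia.
  lia.
move=> j js; rewrite (tf_fwd _ n1 hp hs).
have -> : (j == sidx t) = false by apply/negbTE; lia.
have -> : (j == sidx t + n) = false by apply/negbTE; lia.
by rewrite al.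
Qed.

Lemma fwd_B n m (t : mult_vec n) : 1 <= n -> 2 <= m -> is_partition t ->
  smallest_occurs_atleast m t ->
  [&& is_partition (fwd t), smallest_occurs_atleast m.-1 (fwd t)
     & largest_minus_smallest n (fwd t)].
Proof.
move=> n1 m2 hp hs; have [p al me sn sum] := A_spec hp hs.
have E := tf_fwd _ n1 hp hs.
set s := sidx t in E p al me sn.
apply/and3P; split.
- rewrite part_tfE; apply/eqP.
  have e1 : \sum_(0 <= k < n.*2) (k.+1 * tf (fwd t) k + k.+1 * (k == s)) =
            \sum_(0 <= k < n.*2) (k.+1 * tf t k + k.+1 * (k == s + n)).
    apply: eq_bigr => k _; rewrite E.
    case: (k =P s) => [->|ne].
      have -> : (s == s + n) = false by apply/negbTE; lia.
      rewrite /= addn0 muln0 addn0 muln1; nia.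
    case: (k =P s + n) => [->|ne2].
      by rewrite tf_out /=; [rewrite muln0 !addn0 add0n | lia].
    by rewrite /= !muln0 !addn0 subn0.
  rewrite [X in X = _]big_split [X in _ = X]big_split !sum_ind1 in e1.
  have e3 : \sum_(0 <= k < n.*2) k.+1 * tf t k = \sum_(0 <= k < n) k.+1 * tf t k.
    apply: sum_beyond; first lia.
    by move=> k kn; rewrite tf_out // muln0.
  rewrite e3 sum in e1.
  have h1 : s < n.*2 by lia.
  have h2 : s + n < n.*2 by lia.
  rewrite h1 h2 in e1.
  have e4 : \sum_(0 <= k < n.*2) k.+1 * tf (fwd t) k + s.+1 = n + (s + n).+1 := e1.
  lia.
- apply/small_tfE; exists s; split.
  + rewrite E eqxx; have -> : (s == s + n) = false by apply/negbTE; lia.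
    lia.
  + move=> j js; rewrite E.
    have -> : (j == s) = false by apply/negbTE; lia.
    have -> : (j == s + n) = false by apply/negbTE; lia.
    by rewrite al.
  + rewrite E eqxx; have -> : (s == s + n) = false by apply/negbTE; lia.
    lia.
- apply/lms_tfE; exists s, (s + n); split.
  + rewrite E eqxx; have -> : (s == s + n) = false by apply/negbTE; lia.
    lia.
  + rewrite E eqxx tf_out; last lia.
    by case: (_ == _).
  + move=> l; rewrite E.
    case: (ltnP l s) => ls.
      have -> : (l == s) = false by apply/negbTE; lia.
      have -> : (l == s + n) = false by apply/negbTE; lia.
      by rewrite al.
    case: (leqP l (s + n)) => ln; first by move=> _; apply/andP.
    have -> : (l == s) = false by apply/negbTE; lia.
    have -> : (l == s + n) = false by apply/negbTE; lia.
    by rewrite tf_out //; lia.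
  + lia.
Qed.

Lemma tf_bwd n m (u : mult_vec n.*2) k : 1 <= n -> 2 <= m ->
  is_partition u -> smallest_occurs_atleast m.-1 u -> largest_minus_smallest n u ->
  tf (bwd u) k = if k < n then tf u k + (k == sidx u) else 0.
Proof.
move=> n1 m2 hp hs hl; have [p al me sn [c1 zero bd sum]] := B_spec n1 m2 hp hs hl.
by rewrite /bwd tf_mk.
Qed.

Lemma bwd_A n m (u : mult_vec n.*2) : 1 <= n -> 2 <= m ->
  is_partition u -> smallest_occurs_atleast m.-1 u -> largest_minus_smallest n u ->
  is_partition (bwd u) && smallest_occurs_atleast m (bwd u).
Proof.
move=> n1 m2 hp hs hl; have [p al me sn [c1 zero bd sum]] := B_spec n1 m2 hp hs hl.
have E k := tf_bwd k n1 m2 hp hs hl.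
set s := sidx u in E p al me sn c1 zero bd sum.
apply/andP; split.
- rewrite part_tfE; apply/eqP.
  rewrite -[RHS]sum.
  transitivity (\sum_(0 <= k < n) (k.+1 * tf u k + k.+1 * (k == s))).
    apply: eq_big_nat => k /andP [_ kn]; by rewrite E kn mulnDr.
  by rewrite big_split sum_ind1 sn.
- apply/small_tfE; exists s; split.
  + by rewrite E sn; lia.
  + move=> j js; rewrite E.
    have -> : j < n by lia.
    have -> : (j == s) = false by apply/negbTE; lia.
    by rewrite al.
  + rewrite E sn eqxx; lia.
Qed.

Lemma sidx_bwd n m (u : mult_vec n.*2) : 1 <= n -> 2 <= m ->
  is_partition u -> smallest_occurs_atleast m.-1 u -> largest_minus_smallest n u ->
  sidx (bwd u) = sidx u.
Proof.
move=> n1 m2 hp hs hl; have [p al me sn [c1 zero bd sum]] := B_spec n1 m2 hp hs hl.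
have E k := tf_bwd k n1 m2 hp hs hl.
apply: sidx_spec; first by rewrite E sn; lia.
move=> j js; rewrite E.
have -> : j < n by lia.
have -> : (j == sidx u) = false by apply/negbTE; lia.
by rewrite al.
Qed.

Theorem proposition1p6 (n m : nat) (hn : 1 <= n) (hm : 2 <= m) :
  a_m m n = a_mk m.-1 n.*2 n.
Proof.
rewrite /a_m /a_mk; apply: (@card_bij _ _ _ _ (@fwd n) (@bwd n)).
- move=> t; rewrite !inE => /andP [hp hs]; exact: fwd_B.
- move=> u; rewrite !inE => /and3P [hp hs hl]; exact: bwd_A.
- move=> t; rewrite inE => /andP [hp hs].
  have [p al me sn sum] := A_spec hp hs.
  have /and3P [hp' hs' hl'] := fwd_B hn hm hp hs.
  apply: tf_inj => k.
  rewrite (tf_bwd k hn hm hp' hs' hl') (sidx_fwd hn hm hp hs) (tf_fwd _ hn hp hs).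
  case: (ltnP k n) => kn; last by rewrite tf_out.
  have -> : (k == sidx t + n) = false by apply/negbTE; lia.
  case: (k =P sidx t) => [->|ne] /=; last by rewrite subn0 !addn0.
  rewrite addn0; lia.
- move=> u; rewrite inE => /and3P [hp hs hl].
  have [p al me sn [c1 zero bd sum]] := B_spec hn hm hp hs hl.
  have /andP [hp' hs'] := bwd_A hn hm hp hs hl.
  apply: tf_inj => k.
  rewrite (tf_fwd _ hn hp' hs') (sidx_bwd hn hm hp hs hl) (tf_bwd k hn hm hp hs hl).
  case: (ltnP k n) => kn.
    have -> : (k == sidx u + n) = false by apply/negbTE; lia.
    case: (k =P sidx u) => [->|ne] /=; last by rewrite subn0 !addn0.
    rewrite addn0; lia.
  have -> : (k == sidx u) = false by apply/negbTE; lia.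
  case: (k =P sidx u + n) => [->|ne] /=; first by rewrite c1.
  by rewrite zero //; apply/eqP.
Qed.
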